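(* Let $p$ be a prime, $m\ge 0$ an integer, $T\ge 0$ and $\lambda>0$ real, and suppose $1\le m+\lceil \log_p\lambda\rceil$. Then $$\Pr\Big(\sup_{0\le s\le T}\frac{\big|p^m S^{(p)}_{\lfloor D_p p^{mb}s\rfloor}\big|_p}{p}<\lambda\Big)=\Big(1-\frac{(p[\lambda]_p)^{-b}}{p^{mb}}\Big)^{\lfloor D_p p^{mb}T\rfloor}.$$
   Context: Fix a real exponent $b>0$. For a prime $p$, $\mathbb{Q}_p$ denotes the $p$-adic numbers with absolute value $|\cdot|_p$ and $\mathbb{Z}_p$ its closed unit ball. Let $G_p\subset\mathbb{Q}_p$ be the set of $p$-adic numbers of the form $\sum_{k<0}a_kp^k$ with $a_k\in\{0,\dots,p-1\}$, only finitely many nonzero; $G_p$ is a set of representatives of $\mathbb{Q}_p/\mathbb{Z}_p$ and is given the group structure of $\mathbb{Q}_p/\mathbb{Z}_p$. Let $X^{(p)}$ be a $G_p$-valued random variable with $\Pr(|X^{(p)}|_p=p^k)=(p^b-1)p^{-kb}$ for every integer $k\ge1$, and, conditionally on $|X^{(p)}|_p=p^k$, uniformly distributed on the finite set $\{x\in G_p:|x|_p=p^k\}$. Let $X^{(p)}_1,X^{(p)}_2,\dots$ be i.i.d. copies of $X^{(p)}$ and $S^{(p)}_n=X^{(p)}_1+\dots+X^{(p)}_n$ (sum in the group $G_p$), $S^{(p)}_0=0$. Given a nonnegative real $\sigma_p$ (the diffusion coefficient at $p$), put $D_p=\frac{p^b(p-1)}{p^{b+1}-1}\sigma_p$. For $\lambda>0$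 write $[\lambda]_p=p^{\lceil\log_p\lambda\rceil-1}$. *)

(* Defs.v *)
From HB Require Import structures.
From mathcomp Require Import all_boot all_order all_algebra.
From mathcomp Require Import all_classical all_reals all_analysis.

Set Implicit Arguments.
Unset Strict Implicit.
Unset Printing Implicit Defensive.

Import Order.TTheory GRing.Theory Num.Theory.
Local Open Scope ring_scope.
Local Open Scope classical_set_scope.

Definition padic_abs (R : realType) (p : nat) (q : rat) : R :=
  if q == 0 then 0
  else (p ^ logn p `|denq q|)%:R / (p ^ logn p `|numq q|)%:R.

(* G_p : the p-adic numbers sum_{k<0} a_k p^k (finitely many nonzero digits),
   i.e. the rationals in [0,1) whose reduced denominator is a power of p. *)
Definition inGp (p : nat) (q : rat) : bool :=
  [&& 0 <= q, q < 1 & (p ^ logn p `|denq q| == `|denq q|)%N].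

Definition Gp (p : nat) := {q : rat | inGp p q}.

Definition fracq (q : rat) : rat := q - (Num.floor q)%:~R.

(* group law of G_p transported from Q_p/Z_p: addition modulo Z_p,
   which on these representatives is addition modulo 1 *)
Definition Gpadd (x y : rat) : rat := fracq (x + y).

Definition walk (T : Type) (p : nat) (X : nat -> T -> Gp p) (n : nat) (w : T)
  : rat := \big[Gpadd/0]_(i < n) val (X i w).

Definition Dcoef (R : realType) (p : nat) (b sigma : R) : R :=
  (p%:R `^ b) * (p%:R - 1) / (p%:R `^ (b + 1) - 1) * sigma.

Definition pfloor (R : realType) (p : nat) (lam : R) : R :=
  (p%:R : R) ^ (Num.ceil (ln lam / ln p%:R) - 1).

(* the step distribution of X^(p): P(|X|_p = p^k) = (p^b-1) p^(-kb) for k >= 1,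
   and conditionally on |X|_p = p^k, X is uniform on {x : |x|_p = p^k}
   (equivalently, since that event has positive probability, all points of
   that finite sphere have the same probability). *)
Definition step_law (d : measure_display) (T : measurableType d) (R : realType)
  (P : probability T R) (p : nat) (b : R) (Y : T -> Gp p) : Prop :=
  (forall k : nat, (1 <= k)%N ->
     P (Y @^-1` [set x | padic_abs R p (val x) = (p%:R ^+ k)]) =
     ((p%:R `^ b - 1) * p%:R `^ (- (k%:R * b)))%:E) /\
  (forall (k : nat) (x y : Gp p), (1 <= k)%N ->
     padic_abs R p (val x) = p%:R ^+ k -> padic_abs R p (val y) = p%:R ^+ k ->
     P (Y @^-1` [set x]) = P (Y @^-1` [set y])).

Definition iid_steps (d : measure_display) (T : measurableType d) (R : realType)
  (P : probability T R) (p : nat) (b : R) (X : nat -> T -> Gp p) : Prop :=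
  (forall (i : nat) (A : set (Gp p)), measurable (X i @^-1` A)) /\
  (forall (n : nat) (A : nat -> set (Gp p)),
     P (\bigcap_(i in `I_n) (X i @^-1` A i)) =
     (\prod_(i < n) P (X i @^-1` A i))%E) /\
  (forall i, step_law P b (X i)).

(* Main.v *)
Require Import Defs.
From HB Require Import structures.
From mathcomp Require Import all_boot all_order all_algebra.
From mathcomp Require Import all_classical all_reals all_analysis.
From mathcomp Require Import ring lra.
Import Order.TTheory GRing.Theory Num.Theory.
Local Open Scope ring_scope.
Local Open Scope classical_set_scope.
Set Implicit Arguments.
Unset Strict Implicit.

Definition Cq (p j : nat) (x : rat) := exists z : int, x = z%:~R / (p ^ j)%:R.

Lemma pexp_gt0 (p j : nat) : prime p -> (0 < p ^ j)%N.
Proof. by move=> hp; rewrite expn_gt0 prime_gt0. Qed.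

Lemma Cq_den p j x : prime p -> Cq p j x <-> (denq x %| (p ^ j)%N%:Z)%Z.
Proof.
move=> hp; split.
- case=> z xE.
  have hP : (p ^ j)%:R != 0 :> rat by rewrite pnatr_eq0 -lt0n pexp_gt0.
  have e : numq x * (p ^ j)%N%:Z = z * denq x.
    apply: (@intr_inj rat); rewrite !rmorphM /= numqE xE /=.
    by rewrite pmulrn mulrAC divfK.
  have : (denq x %| numq x * (p ^ j)%N%:Z)%Z by rewrite e dvdz_mull.
  by rewrite Gauss_dvdzr // coprimezE coprime_sym coprime_num_den.
- case/dvdzP => k hk.
  exists (numq x * k); rewrite -[x in LHS]divq_num_den.
  have hd : (denq x)%:~R != 0 :> rat by rewrite intr_eq0 denq_neq0.
  have hk0 : k%:~R != 0 :> rat.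
    apply: contraTneq isT => /eqP; rewrite intr_eq0 => /eqP k0.
    have : (0 < (p ^ j)%N%:Z) by rewrite ltz_nat pexp_gt0.
    by rewrite hk k0 mul0r ltxx.
  rewrite -[X in _ = _ / X]/((p ^ j)%N%:Z%:~R : rat).
  rewrite hk !rmorphM /= invfM mulrA mulfK //.
Qed.

Lemma Cq_int p j (z : int) : prime p -> Cq p j z%:~R.
Proof.
move=> hp; exists (z * (p ^ j)%N%:Z).
have hP : (p ^ j)%:R != 0 :> rat by rewrite pnatr_eq0 -lt0n pexp_gt0.
by rewrite rmorphM /= mulfK.
Qed.

Lemma Cq_add p j x y : Cq p j x -> Cq p j y -> Cq p j (x + y).
Proof. by case=> a -> [b ->]; exists (a + b); rewrite rmorphD mulrDl. Qed.

Lemma Cq_opp p j x : Cq p j x -> Cq p j (- x).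
Proof. by case=> a ->; exists (- a); rewrite rmorphN mulNr. Qed.

Lemma Cq_sub p j x y : Cq p j x -> Cq p j y -> Cq p j (x - y).
Proof. by move=> hx hy; exact: (Cq_add hx (Cq_opp hy)). Qed.

Lemma Cq_le p i j x : prime p -> (i <= j)%N -> Cq p i x -> Cq p j x.
Proof.
move=> hp hij /(Cq_den _ _ hp) hd; apply/(Cq_den _ _ hp).
apply: (dvdz_trans hd); rewrite /dvdz /=.
by rewrite unfold_in /= dvdn_Pexp2l // prime_gt1.
Qed.

Lemma Cq_Gp p x : prime p -> inGp p x -> Cq p (logn p `|denq x|) x.
Proof.
move=> hp /and3P[_ _ /eqP he]; apply/(Cq_den _ _ hp).
by rewrite /dvdz /= he.
Qed.

Lemma Cq_addE p a b x y : prime p -> Cq p a x -> Cq p b y -> Cq p (a + b) (x + y).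
Proof.
move=> hp hx hy; apply: Cq_add.
  exact: (Cq_le hp (leq_addr b a) hx).
exact: (Cq_le hp (leq_addl a b) hy).
Qed.

Lemma struct_q (R : realType) p E x : prime p -> 0 <= x -> x < 1 -> Cq p E x ->
  x = 0 \/ exists e, [/\ (0 < e)%N, (forall j, Cq p j x <-> (e <= j)%N) &
    (forall m, padic_abs R p ((p ^ m)%:R * x) = (p ^ e)%:R / (p ^ m)%:R)].
Proof.
move=> hp x0 x1 /(Cq_den _ _ hp) hd.
have [->|xn0] := eqVneq x 0; [by left|right].
move: hd; rewrite unfold_in /= => hd.
case/(dvdn_pfactor _ _ hp): hd => e _ he.
have hden : denq x = (p ^ e)%N%:Z by rewrite -absz_denq he.
set a := numq x.
have an0 : a != 0 by rewrite /a numq_eq0.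
have hpe : forall k, (p ^ k)%:R != 0 :> rat.
  by move=> k; rewrite pnatr_eq0 -lt0n pexp_gt0.
have xE : x = a%:~R / (p ^ e)%:R by rewrite -[x in LHS]divq_num_den hden.
have e0 : (0 < e)%N.
  case: (posnP e) => // e0; exfalso.
  move: xE; rewrite e0 expn0 divr1 => xE.
  move: x0 x1; rewrite xE ler0z ltrz1 => a0 a1.
  have : a = 0 by apply/eqP; rewrite eq_le a0 andbT -ltzD1 add0r.
  by move/eqP; rewrite (negPf an0).
have hcop : coprime p `|a|.
  have := coprime_num_den x; rewrite -/a he coprime_pexpr // coprime_sym.
  done.
exists e; split => //.
  move=> j; rewrite (Cq_den _ _ hp) unfold_in /= he dvdn_Pexp2l //.
  by rewrite prime_gt1.
move=> m; rewrite /padic_abs.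
have [hem|hme] := leqP e m.
- have hm : (p ^ m)%N = (p ^ (m - e) * p ^ e)%N by rewrite -expnD subnK.
  have yE : (p ^ m)%:R * x = (a * (p ^ (m - e))%N%:Z)%:~R.
    rewrite hm natrM xE rmorphM /=.
    rewrite -[((p ^ (m - e))%N%:Z%:~R)]/((p ^ (m - e))%:R : rat).
    by field; apply: hpe.
  rewrite yE intr_eq0 mulf_eq0 (negPf an0) /= numq_int denq_int /=.
  rewrite abszM /= logn1 expn0 lognM ?absz_gt0 ?pexp_gt0 //.
  rewrite logn_coprime // pfactorK // add0n hm natrM.
  have hpe' : forall k, (p ^ k)%:R != 0 :> R.
    by move=> k; rewrite pnatr_eq0 -lt0n pexp_gt0.
  have hz : ((p ^ (m - e))%N%:Z == 0) = false.
    by apply/negbTE; rewrite -(natz (p ^ (m - e))) pnatr_eq0 -lt0n pexp_gt0.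
  by rewrite hz; field; rewrite !hpe'.
- have hm : (p ^ e)%N = (p ^ m * p ^ (e - m))%N by rewrite -expnD subnKC // ltnW.
  have yE : (p ^ m)%:R * x = a%:~R / ((p ^ (e - m))%N%:Z)%:~R.
    rewrite xE hm natrM.
    rewrite -[((p ^ (e - m))%N%:Z%:~R)]/((p ^ (e - m))%:R : rat).
    by field; rewrite !hpe.
  have hc : coprime `|a| `|(p ^ (e - m))%N%:Z|.
    by rewrite /= coprimeXr // coprime_sym.
  have yn0 : (a%:~R / ((p ^ (e - m))%N%:Z)%:~R : rat) != 0.
    rewrite mulf_eq0 invr_eq0 !intr_eq0 (negPf an0) /=.
    by apply/negbT; rewrite -(natz (p ^ (e - m))) pnatr_eq0; apply/negbTE; rewrite -lt0n pexp_gt0.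
  rewrite yE (negPf yn0) coprimeq_den // coprimeq_num //.
  have hz : ((p ^ (e - m))%N%:Z == 0) = false.
    by apply/negbTE; rewrite -(natz (p ^ (e - m))) pnatr_eq0 -lt0n pexp_gt0.
  rewrite hz /= gtr0_sg ?ltz_nat ?pexp_gt0 // mul1r.
  rewrite pfactorK // logn_coprime // expn0 hm natrM.
  have hpe' : forall k, (p ^ k)%:R != 0 :> R.
    by move=> k; rewrite pnatr_eq0 -lt0n pexp_gt0.
  by field; rewrite hpe'.
Qed.

Lemma fracqE q : Defs.fracq q = q - (Num.floor q)%:~R.
Proof. by []. Qed.

Lemma fracq_ge0 q : 0 <= Defs.fracq q.
Proof. by rewrite fracqE subr_ge0 floor_le. Qed.

Lemma fracq_lt1 q : Defs.fracq q < 1.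
Proof. by rewrite fracqE ltrBlDr -[1 + _]addrC -[1]/(1%:~R) -intrD floorD1_gt. Qed.

Lemma fracq_addr a b : Defs.fracq (a + Defs.fracq b) = Defs.fracq (a + b).
Proof.
rewrite !fracqE addrA floorDrz ?rpredN ?intr_int //.
have h : Num.floor (- ((Num.floor b)%:~R : rat)) = - Num.floor b.
  by rewrite -rmorphN /= intrKfloor.
rewrite h rmorphD /= rmorphN /=; ring.
Qed.

Lemma Cq_fracq p j q : prime p -> Cq p j q <-> Cq p j (Defs.fracq q).
Proof.
move=> hp; rewrite fracqE; split => h.
  exact: (Cq_sub h (Cq_int _ _ hp)).
have -> : q = (q - (Num.floor q)%:~R) + (Num.floor q)%:~R by rewrite subrK.
exact: (Cq_add h (Cq_int _ _ hp)).
Qed.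

Lemma bigGpadd (F : nat -> rat) n :
  \big[Gpadd/0]_(i < n) F i = Defs.fracq (\sum_(i < n) F i).
Proof.
elim: n F => [|n IH] F.
  by rewrite !big_ord0 fracqE floor0 subr0.
rewrite big_ord_recl big_ord_recl /=.
rewrite (IH (fun k => F k.+1)) /Gpadd fracq_addr.
done.
Qed.

Lemma powR_lt_ln (R : realType) (a r lam : R) : 1 < a -> 0 < lam ->
  (a `^ r < lam) = (r < ln lam / ln a).
Proof.
move=> a1 l0; have a0 : 0 < a by apply: lt_trans a1.
rewrite -(ltr_ln (powR_gt0 _ a0) l0) ln_powR ltr_pdivlMr //.
exact: ln_gt0.
Qed.

Lemma powR_le_exp (R : realType) (a r s : R) : 1 < a ->
  (a `^ r <= a `^ s) = (r <= s).
Proof.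
move=> a1; have a0 : 0 < a by apply: lt_trans a1.
rewrite -(ler_ln (powR_gt0 _ a0) (powR_gt0 _ a0)) !ln_powR.
by rewrite ler_pM2r // ln_gt0.
Qed.

Lemma fval_pow (R : realType) (p e m : nat) : (1 < p)%N ->
  (p ^ e)%:R / (p ^ m)%:R / p%:R = (p%:R : R) `^ (e%:R - m%:R - 1).
Proof.
move=> p1; have p0 : (0 : R) < p%:R by rewrite ltr0n ltnW.
rewrite !powRD ?(gt_eqF p0) ?implybT // !powRN !powR_mulrn ?ltW //.
by rewrite powRr1 ?ltW // !natrX.
Qed.

Lemma pfloor_lt (R : realType) p (lam : R) : prime p -> 0 < lam ->
  0 < pfloor p lam /\ pfloor p lam < lam.
Proof.
move=> hp l0; have p1 : (1 : R) < p%:R by rewrite ltr1n prime_gt1.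
have p0 : (0 : R) <= p%:R by rewrite ler0n.
rewrite /pfloor -powR_intmul //; split; first by rewrite powR_gt0 // ltr0n prime_gt0.
by rewrite powR_lt_ln // ceilB1_lt.
Qed.

Lemma fval (R : realType) p m E x (lam : R) : prime p -> 0 < lam ->
  (1 <= m%:Z + Num.ceil (ln lam / ln p%:R))%R ->
  0 <= x -> x < 1 -> Cq p E x ->
  (Cq p `|(m%:Z + Num.ceil (ln lam / ln p%:R))%R|%N x ->
     padic_abs R p ((p ^ m)%:R * x) / p%:R <= pfloor p lam) /\
  (~ Cq p `|(m%:Z + Num.ceil (ln lam / ln p%:R))%R|%N x ->
     lam <= padic_abs R p ((p ^ m)%:R * x) / p%:R).
Proof.
move=> hp l0 hJ x0 x1 hE.
set c := Num.ceil (ln lam / ln p%:R).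
set J := `|(m%:Z + c)%R|%N.
have p1 : (1 : R) < p%:R by rewrite ltr1n prime_gt1.
have p0 : (0 : R) <= p%:R by rewrite ler0n.
have JZ : J%:Z = m%:Z + c by rewrite /J gez0_abs //; apply: le_trans hJ.
have JR : (J%:R : R) = m%:R + c%:~R.
  by rewrite -[(J%:R : R)]/((J%:Z)%:~R : R) JZ rmorphD.
have [pf0 pfl] := pfloor_lt hp l0.
case: (struct_q R hp x0 x1 hE) => [->|[e [e0 hC hpad]]].
  split.
    by move=> _; rewrite mulr0 /padic_abs eqxx mul0r ltW.
  by move=> hn; exfalso; apply: hn; exact: (Cq_int J 0 hp).
rewrite hpad fval_pow ?prime_gt1 //; split.
- move/hC => heJ.
  have : (e%:R : R) <= J%:R by rewrite ler_nat.
  rewrite JR => h.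
  rewrite /pfloor -powR_intmul // powR_le_exp // rmorphB /=.
  lra.
- move=> hn.
  have heJ : (J < e)%N by rewrite ltnNge; apply/negP => /hC.
  have : (J.+1%:R : R) <= e%:R by rewrite ler_nat.
  rewrite -addn1 natrD JR => h.
  have hc := ceil_ge (ln lam / ln p%:R); rewrite -/c in hc.
  rewrite leNgt powR_lt_ln // -leNgt.
  lra.
Qed.

Lemma gp_struct (R : realType) p (x : Gp p) : prime p ->
  val x = 0 \/ exists e, [/\ (0 < e)%N, (forall j, Cq p j (val x) <-> (e <= j)%N) &
     padic_abs R p (val x) = (p%:R : R) ^+ e].
Proof.
move=> hp; have := valP x; rewrite /inGp => /and3P[x0 x1 _].
have hE := Cq_Gp hp (valP x).
case: (struct_q R hp x0 x1 hE) => [->|[e [e0 hC hpad]]]; [by left|right].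
exists e; split => //.
by have := hpad 0%N; rewrite expn0 mul1r divr1 natrX.
Qed.

Lemma gp_split (R : realType) p (x : Gp p) j : prime p ->
  (Cq p j.+1 (val x) <-> (Cq p j (val x) \/ padic_abs R p (val x) = (p%:R : R) ^+ j.+1)) /\
  ~ (Cq p j (val x) /\ padic_abs R p (val x) = (p%:R : R) ^+ j.+1).
Proof.
move=> hp; have p1 : (1 < p)%N by rewrite prime_gt1.
case: (gp_struct R x hp) => [x0|[e [e0 hC hpad]]].
  have c0 : forall k, Cq p k (val x) by move=> k; rewrite x0; exact: (Cq_int k 0 hp).
  have pa : padic_abs R p (val x) = 0 by rewrite x0 /padic_abs eqxx.
  have pn : (p%:R : R) ^+ j.+1 != 0 by rewrite expf_neq0 // pnatr_eq0 -lt0n ltnW.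
  rewrite pa; split.
    by split => _; [left|]; apply: c0.
  by case=> _ h; move: pn; rewrite -h eqxx.
have heq : (padic_abs R p (val x) = (p%:R : R) ^+ j.+1) <-> e = j.+1.
  rewrite hpad -!natrX; split => [/eqP|->//].
  by rewrite eqr_nat => /eqP /(expnI p1).
rewrite heq !hC; split.
  split => [h|[h|h]]; last by rewrite h.
    by rewrite leq_eqVlt in h; case/orP: h => [/eqP h|h]; [right|left].
  exact: leqW.
by case=> h h'; rewrite h' ltnn in h.
Qed.

Lemma probA d (T : measurableType d) (R : realType) (P : probability T R) p (b : R)
  (Y : T -> Gp p) :
  prime p -> 0 < b -> (forall A : set (Gp p), measurable (Y @^-1` A)) ->
  step_law P b Y ->
  forall j, P (Y @^-1` [set x | Cq p j (val x)]) = (1 - ((p%:R : R) `^ (- b)) ^+ j)%:E.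
Proof.
move=> hp b0 hm [hS _].
set q := (p%:R : R) `^ (- b).
have p1 : (1 : R) < p%:R by rewrite ltr1n prime_gt1.
have p0 : (0 : R) < p%:R by apply: lt_trans p1.
have pb0 : 0 < (p%:R : R) `^ b by apply: powR_gt0.
have q0 : 0 <= q by apply/ltW/powR_gt0.
have hpq : (p%:R : R) `^ b * q = 1 by rewrite /q powRN mulfV // gt_eqF.
have hSk : forall k, (0 < k)%N ->
    P (Y @^-1` [set x | padic_abs R p (val x) = p%:R ^+ k]) = (q ^+ k.-1 - q ^+ k)%:E.
  move=> k k0; rewrite hS //; congr (_%:E).
  have -> : (p%:R : R) `^ (- (k%:R * b)) = q ^+ k.
    by rewrite -mulrN mulrC powRrM powR_mulrn.
  case: k k0 => // k _ /=.
  by rewrite exprS mulrBl mul1r mulrA hpq mul1r.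
set A := fun j => Y @^-1` [set x : Gp p | Cq p j (val x)].
set S := fun k => Y @^-1` [set x : Gp p | padic_abs R p (val x) = (p%:R : R) ^+ k].
have hind : forall j, P (A j) = (P (A 0%N) + (1 - q ^+ j)%:E)%E.
  elim => [|j IH]; first by rewrite expr0 subrr adde0.
  have -> : A j.+1 = A j `|` S j.+1.
    apply/seteqP; split => w /=.
      by case: (gp_split R (Y w) j hp) => [[h _] _] /h.
    by case: (gp_split R (Y w) j hp) => [[_ h] _] /h.
  rewrite (measureU P (hm _) (hm _)); last first.
    apply/seteqP; split => w //= [h1 h2].
    by case: (gp_split R (Y w) j hp) => _ /(_ (conj h1 h2)).
  change (P (A j) + P (S j.+1) = (P (A 0%N) + (1 - q ^+ j.+1)%:E)%E).
  rewrite IH /S hSk // -addeA -EFinD; congr (_ + _%:E)%E.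
  by rewrite /=; ring.
have hA0 : P (A 0%N) = 0%E.
  have ge0 : (0 <= P (A 0%N))%E by apply: measure_ge0.
  have fin : P (A 0%N) \is a fin_num.
    rewrite ge0_fin_numE //; apply: (le_lt_trans (probability_le1 P (hm _))).
    by rewrite ltey.
  have rE := fineK fin; set r := fine (P (A 0%N)) in rE.
  have hr : forall j, r <= q ^+ j.
    move=> j; have := probability_le1 P (hm [set x : Gp p | Cq p j (val x)]).
    rewrite -/(A j) hind -rE -EFinD lee_fin => h.
    lra.
  have r0 : 0 <= r by rewrite -lee_fin rE.
  have hq1 : `|q| < 1.
    rewrite ger0_norm // /q powR_lt_ln // ln1 mul0r.
    by rewrite oppr_lt0.
  suff : r <= 0 by move=> h; rewrite -rE (le_anti (andb_true_intro (conj h r0))).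
  rewrite leNgt; apply/negP => rpos.
  have [N _ HN] := cvgr0_norm_lt (fun n => q ^+ n) (cvg_expr hq1) r rpos.
  have := HN N (leqnn N); rewrite /= ger0_norm ?exprn_ge0 //.
  by rewrite ltNge hr.
by move=> j; rewrite -/(A j) hind hA0 add0e.
Qed.

Lemma sumC p J N (F : nat -> rat) :
  (forall n, (n <= N)%N -> Cq p J (\sum_(i < n) F i)) <->
  (forall i, (i < N)%N -> Cq p J (F i)).
Proof.
split => h.
  move=> i iN; have h1 := h i.+1 iN; have h0 := h i (ltnW iN).
  have := Cq_sub h1 h0; rewrite big_ord_recr /= addrAC subrr add0r.
  done.
elim => [|n IH] nN.
  by rewrite big_ord0; exists 0; rewrite mul0r.
rewrite big_ord_recr /=; apply: Cq_add; first exact: IH (ltnW nN).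
exact: h.
Qed.

Lemma sumE p n (F : nat -> rat) : prime p -> (forall i, exists e, Cq p e (F i)) ->
  exists E, Cq p E (\sum_(i < n) F i).
Proof.
move=> hp h; elim: n => [|n [E hE]].
  by exists 0%N; rewrite big_ord0; exists 0; rewrite mul0r.
have [e he] := h n; exists (E + e)%N; rewrite big_ord_recr /=.
exact: Cq_addE.
Qed.

Lemma time_le (R : realType) (K T s : R) : 0 <= s -> s <= T ->
  (Num.truncn (K * s) <= Num.truncn (K * T))%N.
Proof.
move=> s0 sT; have [K0|K0] := leP 0 K.
  by apply: le_truncn; rewrite ler_wpM2l.
have : ~~ (1 <= K * s).
  rewrite -ltNge; apply: le_lt_trans (ltr01).
  by rewrite mulr_le0_ge0 // ltW.
by move/truncn0Pn => ->.
Qed.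

Lemma time_hit (R : realType) (K T : R) n : 0 <= T ->
  (n <= Num.truncn (K * T))%N -> exists s, [/\ 0 <= s, s <= T & Num.truncn (K * s) = n].
Proof.
move=> T0 nN; case: (posnP n) => [->|n0].
  by exists 0; rewrite mulr0 truncn0 lexx T0.
have KT1 : 1 <= K * T by rewrite -truncn_gt0; apply: leq_trans nN.
have K0 : 0 < K.
  rewrite ltNge; apply/negP => K0.
  have : K * T <= 0 by rewrite mulr_le0_ge0.
  by move=> h; have := le_trans KT1 h; rewrite ler10.
have nKT : (n%:R : R) <= K * T by rewrite -truncn_ge_nat // (le_trans ler01 KT1).
exists (n%:R / K); split.
- by rewrite divr_ge0 // ltW.
- by rewrite ler_pdivrMr // mulrC.
- rewrite mulrC divfK ?gt_eqF //.
  by apply: truncn_def; rewrite lexx /= ltr_nat.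
Qed.

Lemma padic_ge0 (R : realType) p q : 0 <= padic_abs R p q.
Proof. by rewrite /padic_abs; case: ifP => // _; rewrite divr_ge0. Qed.

Lemma event_w (d : measure_display) (Omega : measurableType d) (R : realType) p
  (X : nat -> Omega -> Gp p) (m : nat) (K T lam : R) w :
  prime p -> 0 <= T -> 0 < lam ->
  (1 <= m%:Z + Num.ceil (ln lam / ln p%:R))%R ->
  (sup [set padic_abs R p ((p ^ m)%:R * walk X (Num.truncn (K * s)) w) / p%:R
          | s in `[0, T]] < lam) <->
  (forall i, (i < Num.truncn (K * T))%N ->
     Cq p `|(m%:Z + Num.ceil (ln lam / ln p%:R))%R|%N (val (X i w))).
Proof.
move=> hp T0 l0 hJ.
set J := `|(m%:Z + Num.ceil (ln lam / ln p%:R))%R|%N.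
set N := Num.truncn (K * T).
set f := fun n => padic_abs R p ((p ^ m)%:R * walk X n w) / p%:R.
have hW : forall n, walk X n w = Defs.fracq (\sum_(i < n) val (X i w)).
  by move=> n; rewrite /walk (bigGpadd (fun k => val (X k w))).
have hE : forall n, exists E, Cq p E (walk X n w).
  move=> n; have [E hE] := @sumE p n (fun k => val (X k w)) hp
    (fun i => ex_intro (fun e => Cq p e (val (X i w))) _ (Cq_Gp hp (valP (X i w)))).
  by exists E; rewrite hW -Cq_fracq.
have hf : forall n, (Cq p J (walk X n w) -> f n <= pfloor p lam) /\
                    (~ Cq p J (walk X n w) -> lam <= f n).
  move=> n; have [E hEn] := hE n.
  by apply: (fval hp l0 hJ _ _ hEn); rewrite hW ?fracq_ge0 ?fracq_lt1.
have f0 : forall n, 0 <= f n by move=> n; rewrite /f divr_ge0 ?padic_ge0.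
have [pf0 pfl] := pfloor_lt hp l0.
rewrite -(sumC p J N (fun k => val (X k w))).
have eqC : forall n, Cq p J (\sum_(i < n) val (X i w)) <-> Cq p J (walk X n w).
  by move=> n; rewrite hW -Cq_fracq.
set Img := [set _ | s in _].
have hImg : forall y, Img y -> exists2 k, (k <= N)%N & y = f k.
  move=> y [s]; rewrite /= in_itv /= => /andP[s0 sT] <-.
  by exists (Num.truncn (K * s)) => //; apply: time_le.
have hImg2 : forall k, (k <= N)%N -> Img (f k).
  move=> k kN; have [s [s0 sT sk]] := time_hit T0 kN.
  by exists s; [rewrite /= in_itv /= s0 sT | rewrite sk].
split.
- move=> hs n nN; apply/eqC.
  case: (pselect (Cq p J (walk X n w))) => // hn; exfalso.
  have h1 := (hf n).2 hn.
  have hub : has_ubound Img.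
    exists (\sum_(k < N.+1) f k) => y /hImg [k kN ->].
    rewrite (bigD1 (Ordinal (kN : (k < N.+1)%N))) //= lerDl.
    by apply: sumr_ge0 => i _.
  have h2 : f n <= sup Img by apply: ub_le_sup hub _ (hImg2 n nN).
  by have := le_lt_trans (le_trans h1 h2) hs; rewrite ltxx.
- move=> hall; apply: le_lt_trans pfl.
  apply: ge_sup.
    by exists (f 0%N); apply: hImg2.
  move=> y /hImg [k kN ->].
  by apply: (hf k).1; apply/eqC; apply: hall.
Qed.

Lemma final_alg (R : realType) p (b lam : R) (m : nat) : prime p ->
  (1 <= m%:Z + Num.ceil (ln lam / ln p%:R))%R ->
  ((p%:R : R) `^ (- b)) ^+ `|(m%:Z + Num.ceil (ln lam / ln p%:R))%R|%N =
  (p%:R * pfloor p lam) `^ (- b) / p%:R `^ (m%:R * b).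
Proof.
move=> hp hJ.
set c := Num.ceil (ln lam / ln p%:R).
set J := `|(m%:Z + c)%R|%N.
have p1 : (1 : R) < p%:R by rewrite ltr1n prime_gt1.
have p0 : (0 : R) < p%:R by apply: lt_trans p1.
have JZ : J%:Z = m%:Z + c by rewrite /J gez0_abs //; apply: le_trans hJ.
have JR : (J%:R : R) = m%:R + c%:~R.
  by rewrite -[(J%:R : R)]/((J%:Z)%:~R : R) JZ rmorphD.
have hc : (p%:R : R) * pfloor p lam = p%:R ^ c.
  rewrite /pfloor -{1}(expr1z (p%:R : R)) -exprzDr ?unitfE ?gt_eqF //.
  by rewrite addrC subrK.
rewrite hc -powR_intmul ?ltW // -powRrM -powR_mulrn ?powR_ge0 // -powRrM.
rewrite -powRN -powRD; last by rewrite (gt_eqF p0) implybT.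
by congr (_ `^ _); rewrite JR; ring.
Qed.

Unset Implicit Arguments.
Set Strict Implicit.

Theorem lemma1 (d : measure_display) (Omega : measurableType d) (R : realType)
  (P : probability Omega R) (p : nat) (b sigma : R) (X : nat -> Omega -> Gp p)
  (m : nat) (T lam : R) :
  prime p -> 0 < b -> 0 <= sigma -> iid_steps P b X ->
  0 <= T -> 0 < lam ->
  (1 <= m%:Z + Num.ceil (ln lam / ln p%:R))%R ->
  P [set w | sup [set padic_abs R p ((p ^ m)%:R * walk X
                     (Num.truncn (Dcoef p b sigma * p%:R `^ (m%:R * b) * s)) w)
                   / p%:R | s in `[0, T]] < lam] =
  ((1 - (p%:R * pfloor p lam) `^ (- b) / p%:R `^ (m%:R * b))
     ^+ Num.truncn (Dcoef p b sigma * p%:R `^ (m%:R * b) * T))%:E.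
Proof.
move=> hp b0 s0 [hm [hI hlaw]] T0 l0 hJ.
set K := Dcoef p b sigma * p%:R `^ (m%:R * b).
set J := `|(m%:Z + Num.ceil (ln lam / ln p%:R))%R|%N.
set A := [set x : Gp p | Cq p J (val x)].
set N := Num.truncn (K * T).
suff -> : [set w | sup [set padic_abs R p ((p ^ m)%:R * walk X
                     (Num.truncn (K * s)) w) / p%:R | s in `[0, T]] < lam] =
          \bigcap_(i in `I_N) (X i @^-1` A).
  have := hI N (fun _ => A); rewrite /= => ->.
  rewrite (eq_bigr (fun _ => (1 - ((p%:R : R) `^ (- b)) ^+ J)%:E)); last first.
    by move=> i _; rewrite /A (probA hp b0 (hm i) (hlaw i)).
  by rewrite prodEFin prodr_const card_ord final_alg.
apply/seteqP; split => w /=.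
  by move/(@event_w _ _ _ _ X m K T lam w hp T0 l0 hJ) => h i /= iN; exact: h.
move=> h; apply/(@event_w _ _ _ _ X m K T lam w hp T0 l0 hJ) => i iN; exact: (h i iN).
Qed.
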